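(* Let $n\ge2$. An algebra has a strong $n$-cube term if and only if it has a Mal'cev term.
   Context: A Mal'cev term is a ternary term $q$ such that $q(x,x,y)\approx y\approx q(y,x,x)$ holds. For $k\ge0$, $k_{(i)}$ denotes the $i$-th binary digit of $k$ (least significant is $i=0$). For $i<n$ let $\rho_i\colon\{0,\dots,2^n-1\}\to\{0,\dots,2^n-1\}$ map $k$ to the number obtained from $k$ by setting its $i$-th binary digit to $0$. A strong $n$-cube term is a $(2^n-1)$-ary term $q_n$ such that, for each $i<n$, the algebra satisfies the identity $q_n(y_{\rho_i(0)},y_{\rho_i(1)},\dots,y_{\rho_i(2^n-2)})\approx y_{\rho_i(2^n-1)}$ (i.e. $q_n(x_0,\dots,x_{2^n-2})=x_{2^n-1}$ whenever $x_k=x_l$ for all $k,l<2^n$ differing only in the $i$-th binary digit). For $n=2$ these identities are $q_2(x,y,x)\approx y$ and $q_2(x,x,y)\approx y$. *)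

(* Defs.v *)
From mathcomp Require Import all_boot.
Set Implicit Arguments. Unset Strict Implicit. Unset Printing Implicit Defensive.

Section UA.
Variables (F : Type) (ar : F -> nat).

Inductive term (V : Type) : Type :=
  | Var : V -> term V
  | App : forall f : F, ('I_(ar f) -> term V) -> term V.

Variables (A : Type) (op : forall f : F, ('I_(ar f) -> A) -> A).

Fixpoint eval (V : Type) (e : V -> A) (t : term V) : A :=
  match t with
  | Var v => e v
  | App f ts => op (fun i => eval e (ts i))
  end.

Definition malcev_term (q : term 'I_3) : Prop :=
  forall x y : A,
    eval (fun k : 'I_3 => nth x [:: x; x; y] k) q = y /\
    eval (fun k : 'I_3 => nth x [:: y; x; x] k) q = y.

(* rho i k : k with its i-th binary digit set to 0. *)
Definition rho (i k : nat) : nat := k - (odd (k %/ 2 ^ i)) * 2 ^ i.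

Definition strong_cube_term (n : nat) (q : term 'I_(2 ^ n - 1)) : Prop :=
  forall i : nat, i < n ->
    forall y : nat -> A,
      eval (fun k : 'I_(2 ^ n - 1) => y (rho i k)) q = y (rho i (2 ^ n - 1)).

End UA.

(* Main.v *)
Require Import Defs.
From mathcomp Require Import all_boot.
From mathcomp Require Import zify.
From Stdlib Require Import FunctionalExtensionality.
Set Implicit Arguments. Unset Strict Implicit. Unset Printing Implicit Defensive.

Section Helpers.
Variables (F : Type) (ar : F -> nat).
Variables (A : Type) (op : forall f : F, ('I_(ar f) -> A) -> A).

Fixpoint tsubst (V W : Type) (s : V -> term ar W) (t : term ar V) : term ar W :=
  match t with
  | Var v => s v
  | App f ts => App (fun i => tsubst s (ts i))
  end.

Definition rename (V W : Type) (g : V -> W) (t : term ar V) : term ar W :=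
  tsubst (fun v => Var ar (g v)) t.

Lemma eval_subst (V W : Type) (s : V -> term ar W) (e : W -> A) (t : term ar V) :
  eval op e (tsubst s t) = eval op (fun v => eval op e (s v)) t.
Proof.
elim: t => [v|f ts IH] //=. f_equal; apply: functional_extensionality => i; exact: IH.
Qed.

Lemma eq_eval (V : Type) (e e' : V -> A) (t : term ar V) :
  (forall v, e v = e' v) -> eval op e t = eval op e' t.
Proof.
move=> H; elim: t => [v|f ts IH] //=. f_equal; apply: functional_extensionality => i; exact: IH.
Qed.

Lemma eval_rename (V W : Type) (g : V -> W) (e : W -> A) (t : term ar V) :
  eval op e (rename g t) = eval op (fun v => e (g v)) t.
Proof. by rewrite /rename eval_subst. Qed.

Variable p : term ar 'I_3.
Hypothesis Hp : malcev_term op p.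

Definition P (a b c : A) := eval op (fun k : 'I_3 => nth b [:: a; b; c] k) p.

Lemma P1 x y : P x x y = y. Proof. by case: (Hp x y). Qed.
Lemma P2 x y : P y x x = y. Proof. by case: (Hp x y). Qed.

Fixpoint Sem (m : nat) (x : nat -> A) : A :=
  match m with
  | 0 => x 0
  | m'.+1 => P (Sem m' (fun k => x (2 ^ m'.+1 + k))) (Sem m' x) (x (2 ^ m'.+1 - 1))
  end.

Fixpoint Tm (m : nat) : term ar nat :=
  match m with
  | 0 => Var ar 0
  | m'.+1 => tsubst (fun k : 'I_3 => nth (Tm m')
       [:: rename (addn (2 ^ m'.+1)) (Tm m'); Tm m'; Var ar (2 ^ m'.+1 - 1)] k) p
  end.

Lemma eval_Tm m e : eval op e (Tm m) = Sem m e.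
Proof.
elim: m e => [|m IH] e //=. rewrite eval_subst /P. apply: eq_eval.
move=> [[|[|[|k]]] Hk] //=. by rewrite eval_rename IH.
Qed.

Lemma Sem_agree m x x' : (forall k, k < 2 ^ m.+1 - 1 -> x k = x' k) ->
  Sem m x = Sem m x'.
Proof.
elim: m x x' => [|m IH] x x' H /=.
  by apply: H.
have Hpos : 0 < 2 ^ m.+1 by rewrite expn_gt0.
have E : 2 ^ m.+2 = 2 ^ m.+1 + 2 ^ m.+1 by rewrite expnS; lia.
rewrite E in H.
congr P.
- apply: IH => k Hk; apply: H; lia.
- apply: IH => k Hk; apply: H; lia.
- apply: H; lia.
Qed.

Lemma rho_le i k : odd (k %/ 2 ^ i) * 2 ^ i <= k.
Proof.
case Ho: (odd _) => //; rewrite mul1n.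
have Hd : 0 < k %/ 2 ^ i by case: (k %/ 2 ^ i) Ho.
apply: leq_trans (leq_divM k (2 ^ i)); exact: leq_pmull.
Qed.

Lemma L1 i n k : i < n -> rho i (2 ^ n + k) = 2 ^ n + rho i k.
Proof.
move=> Hi; rewrite /rho.
have -> : 2 ^ n = 2 ^ (n - i) * 2 ^ i by rewrite -expnD subnK // ltnW.
rewrite divnMDl ?expn_gt0 // oddD oddX /=.
have -> : (n - i == 0) = false by apply/eqP; lia.
rewrite /= addnBA //; exact: rho_le.
Qed.

Lemma L2 n k : k < 2 ^ n -> rho n (2 ^ n + k) = k.
Proof.
move=> Hk; rewrite /rho.
have -> : (2 ^ n + k) %/ 2 ^ n = 1 by rewrite -{1}(mul1n (2 ^ n)) divnMDl ?expn_gt0 // divn_small.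
by rewrite /= mul1n addKn.
Qed.

Lemma L3 n k : k < 2 ^ n -> rho n k = k.
Proof. by move=> Hk; rewrite /rho divn_small // subn0. Qed.

Lemma Sem_cube m i : i <= m -> forall y : nat -> A,
  Sem m (fun k => y (rho i k)) = y (rho i (2 ^ m.+1 - 1)).
Proof.
elim: m i => [|m IH] i Hi y.
  by move: Hi; rewrite leqn0 => /eqP -> /=.
have Hpos : 0 < 2 ^ m.+1 by rewrite expn_gt0.
have E : 2 ^ m.+2 - 1 = 2 ^ m.+1 + (2 ^ m.+1 - 1) by rewrite expnS; lia.
rewrite E /=.
case: (ltnP i m.+1) => Him.
- have -> : Sem m (fun k => y (rho i (2 ^ m.+1 + k))) =
            Sem m (fun k => (fun j => y (2 ^ m.+1 + j)) (rho i k)).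
    by apply: Sem_agree => k _; rewrite L1.
  rewrite (IH i Him (fun j => y (2 ^ m.+1 + j))) (IH i Him y) -L1 //. exact: P2.
- have ei : i = m.+1 by apply/eqP; rewrite eqn_leq Hi Him.
  subst i.
  have -> : Sem m (fun k => y (rho m.+1 (2 ^ m.+1 + k))) = Sem m y.
    by apply: Sem_agree => k Hk; rewrite L2 //; lia.
  have -> : Sem m (fun k => y (rho m.+1 k)) = Sem m y.
    by apply: Sem_agree => k Hk; rewrite L3 //; lia.
  rewrite L2 ?L3; try lia. exact: P1.
Qed.

End Helpers.

Lemma rho0_eq N k : 4 <= N -> k < N - 1 -> N %% 2 = 0 ->
  (rho 0 k == N - 2) = (k == N - 2).
Proof.
move=> HN Hk HE; rewrite /rho expn0 divn1 muln1 -modn2.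
by apply/idP/idP => /eqP H; apply/eqP; lia.
Qed.

Lemma rho1_eq N k : 4 <= N -> k < N - 1 -> N %% 4 = 0 ->
  (rho 1 k == N - 3) = (k == N - 3).
Proof.
move=> HN Hk HE; rewrite /rho expn1 -modn2.
by apply/idP/idP => /eqP H; apply/eqP; lia.
Qed.

Lemma rho0_top N : 4 <= N -> N %% 2 = 0 -> rho 0 (N - 1) = N - 2.
Proof. by move=> HN HE; rewrite /rho expn0 divn1 muln1 -modn2; lia. Qed.

Lemma rho1_top N : 4 <= N -> N %% 4 = 0 -> rho 1 (N - 1) = N - 3.
Proof. by move=> HN HE; rewrite /rho expn1 -modn2; lia. Qed.

Theorem mainTheorem8 (F : Type) (ar : F -> nat) (A : Type)
    (op : forall f : F, ('I_(ar f) -> A) -> A) (n : nat) :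
  2 <= n ->
  ((exists q : term ar 'I_(2 ^ n - 1), strong_cube_term op q) <->
   (exists q : term ar 'I_3, malcev_term op q)).
Proof.
move=> Hn.
have HN4 : 4 <= 2 ^ n.
  by rewrite -(subnK Hn) expnD; apply: leq_pmull; rewrite expn_gt0.
have HM : 2 ^ n %% 4 = 0.
  by apply/eqP; rewrite -/(dvdn 4 _) -(subnK Hn) expnD dvdn_mull.
have HM2 : 2 ^ n %% 2 = 0 by lia.
split.
- move=> [q Hq].
  pose g := fun k : 'I_(2 ^ n - 1) =>
    if nat_of_ord k == 2 ^ n - 3 then (@Ordinal 3 0 isT) else if nat_of_ord k == 2 ^ n - 2 then (@Ordinal 3 2 isT)
    else (@Ordinal 3 1 isT).
  exists (rename g q) => x z; split.
  + rewrite eval_rename.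
    have := Hq 0 (leq_trans (isT : 0 < 2) Hn) (fun j => if j == 2 ^ n - 2 then z else x).
    rewrite rho0_top // eqxx => E; apply: (etrans _ E).
    apply: eq_eval => k; rewrite rho0_eq // /g.
    have [H1|H1] := eqVneq (nat_of_ord k) (2 ^ n - 3).
      rewrite H1 /=.
      have -> : (2 ^ n - 3 == 2 ^ n - 2) = false by apply/negbTE/eqP; lia.
      by [].
    by case: ifP.
  + rewrite eval_rename.
    have := Hq 1 (leq_trans (isT : 1 < 2) Hn) (fun j => if j == 2 ^ n - 3 then z else x).
    rewrite rho1_top // eqxx => E; apply: (etrans _ E).
    apply: eq_eval => k; rewrite rho1_eq // /g.
    have [H1|H1] := eqVneq (nat_of_ord k) (2 ^ n - 3).
      by [].
    by case: ifP.
- move=> [p Hp].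
  have H0 : 0 < 2 ^ n - 1 by lia.
  pose f := fun k : nat => insubd (Ordinal H0) k : 'I_(2 ^ n - 1).
  exists (rename f (Tm p n.-1)) => i Hi y.
  rewrite eval_rename eval_Tm.
  have En : n = n.-1.+1 by lia.
  rewrite (@Sem_agree _ _ _ _ _ _ _ (fun k => y (rho i k))).
    rewrite Sem_cube //; [by rewrite -En | lia].
  move=> k Hk; rewrite /f val_insubd ifT //; by rewrite -En in Hk.
Qed.
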